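(* If $X$ is a closed convex subset of $\mathbb{R}^n$, then $\mathit{HM}_1(X)=0$.
   Context: $X$ carries the Euclidean (subspace) metric. For a metric space $X$, the magnitude homology $\mathit{HM}^\ell_k(X)$ is the degree-$k$ homology of the chain complex whose $k$-chains in grading $\ell$ are the free abelian group on symbols $\langle x_0,\dots,x_k\rangle$ with $x_i\neq x_{i+1}$ and $d(x_0,x_1)+\cdots+d(x_{k-1},x_k)=\ell$, with boundary $\sum_i(-1)^i d^i$, where $d^i$ deletes $x_i$ if $d(x_{i-1},x_i)+d(x_i,x_{i+1})=d(x_{i-1},x_{i+1})$ and is $0$ otherwise (deleting an endpoint always gives $0$); $\mathit{HM}_1(X)=0$ means $\mathit{HM}^\ell_1(X)=0$ for all $\ell$. *)

(* Defs.v *)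
From HB Require Import structures.
From mathcomp Require Import all_boot all_order all_algebra.
From mathcomp Require Import all_classical all_reals all_analysis.
Set Implicit Arguments. Unset Strict Implicit. Unset Printing Implicit Defensive.
Import Order.TTheory GRing.Theory Num.Theory.
Import numFieldNormedType.Exports.
Local Open Scope classical_set_scope.
Local Open Scope ring_scope.

(* A "tuple" <x_0,...,x_k> is a seq T of size k+1.  A chain is a formal   *)
(* Z-linear combination of tuples, represented as a finite list of        *)
(* (coefficient, tuple) pairs; two chains are equal in the free abelian   *)
(* group iff their coefficient functions [coef] agree.                    *)

Section Magnitude.
Variables (R : realType) (T : eqType) (d : T -> T -> R) (x0 : T).

Fixpoint tlen (s : seq T) : R :=
  match s with
  | x :: ((y :: _) as s') => d x y + tlen s'
  | _ => 0
  end.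

(* generator of C_k^l over the subspace X *)
Definition adm (X : set T) (k : nat) (l : R) (s : seq T) : Prop :=
  [/\ size s = k.+1, (forall x, x \in s -> X x),
      sorted (fun a b => a != b) s & tlen s = l].

(* d^i is nonzero: i is an interior index and x_i lies "between" *)
Definition face_ok (s : seq T) (i : nat) : bool :=
  (0 < i)%N && (i < (size s).-1)%N &&
  (d (nth x0 s i.-1) (nth x0 s i) + d (nth x0 s i) (nth x0 s i.+1)
     == d (nth x0 s i.-1) (nth x0 s i.+1)).

Definition del (s : seq T) (i : nat) : seq T := take i s ++ drop i.+1 s.

Definition chain := seq (int * seq T).

Definition bd_gen (s : seq T) : chain :=
  [seq ((-1) ^+ i, del s i) | i <- iota 0 (size s) & face_ok s i].

Definition bd (c : chain) : chain :=
  flatten [seq [seq (p.1 * q.1, q.2) | q <- bd_gen p.2] | p <- c].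

Definition coef (c : chain) (t : seq T) : int :=
  \sum_(p <- c | p.2 == t) p.1.

Definition in_C (X : set T) (k : nat) (l : R) (c : chain) : Prop :=
  forall p, p \in c -> adm X k l p.2.

Definition HM_zero (X : set T) (k : nat) (l : R) : Prop :=
  forall c : chain, in_C X k l c -> (forall t, coef (bd c) t = 0) ->
  exists b : chain, in_C X k.+1 l b /\ (forall t, coef (bd b) t = coef c t).

Definition HM_vanishes (X : set T) (k : nat) : Prop :=
  forall l : R, HM_zero X k l.

End Magnitude.

Definition edist (R : realType) (n : nat) (x y : 'rV[R]_n) : R :=
  Num.sqrt (\sum_(i < n) (x ord0 i - y ord0 i) ^+ 2).

Definition convex_subset (R : realType) (n : nat) (X : set 'rV[R]_n) : Prop :=
  forall x y (t : R), X x -> X y -> 0 <= t -> t <= 1 ->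
    X ((1 - t) *: x + t *: y).

Definition HM_euclid (R : realType) (n : nat) (X : set 'rV[R]_n) (k : nat) :=
  HM_vanishes (@edist R n) 0 X k.

(* Main.v *)
Require Import Defs.
From HB Require Import structures.
From mathcomp Require Import all_boot all_order all_algebra.
From mathcomp Require Import all_classical all_reals all_analysis.
From mathcomp Require Import ring lra.
Import numFieldNormedType.Exports.
Import Order.TTheory GRing.Theory Num.Theory.
Local Open Scope classical_set_scope.
Local Open Scope ring_scope.

Set Implicit Arguments.
Section Aux.
Variables (R : realType) (n : nat).
Definition mid (x y : 'rV[R]_n) : 'rV[R]_n := (1 - 2^-1) *: x + 2^-1 *: y.

Lemma edist_half (x y z : 'rV[R]_n) :
  (forall i, x ord0 i - z ord0 i = 2^-1 * (x ord0 i - y ord0 i)) ->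
  Defs.edist x z = 2^-1 * Defs.edist x y.
Proof.
move=> H; rewrite /Defs.edist.
have -> : \sum_(i < n) (x ord0 i - z ord0 i) ^+ 2
   = 2^-1 ^+ 2 * \sum_(i < n) (x ord0 i - y ord0 i) ^+ 2.
  by rewrite mulr_sumr; apply: eq_bigr => i _; rewrite H exprMn.
have h0 : (0:R) <= 2^-1 by rewrite invr_ge0.
by rewrite sqrtrM ?sqrtr_sqr ?ger0_norm // exprn_ge0.
Qed.

Lemma edist_mid (x y : 'rV[R]_n) :
  Defs.edist x (mid x y) + Defs.edist (mid x y) y = Defs.edist x y.
Proof.
rewrite (@edist_half x y (mid x y)); last by move=> i; rewrite !mxE; ring.
have -> : Defs.edist (mid x y) y = Defs.edist y (mid x y).
  rewrite /Defs.edist; apply: congr1; apply: eq_bigr => i _; ring.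
have hh : 1 - 2^-1 = 2^-1 :> R by lra.
rewrite (@edist_half y x (mid x y)); last by move=> i; rewrite !mxE hh; lra.
have -> : Defs.edist y x = Defs.edist x y.
  rewrite /Defs.edist; apply: congr1; apply: eq_bigr => i _; ring.
lra.
Qed.

Lemma mid_neq (x y : 'rV[R]_n) : x != y -> (x != mid x y) && (mid x y != y).
Proof.
move=> /eqP nxy; apply/andP; split; apply/eqP => E; apply: nxy;
  apply/matrixP => i j; move/matrixP: E => /(_ i j); rewrite !mxE => E; lra.
Qed.
End Aux.
Arguments mid {R n}. Arguments edist_mid {R n}. Arguments mid_neq {R n}.

Lemma bd_cons (R : realType) (T : eqType) (d : T -> T -> R) (x0 : T) p c :
  bd d x0 (p :: c) = [seq (p.1 * q.1, q.2) | q <- bd_gen d x0 p.2] ++ bd d x0 c.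
Proof. by []. Qed.

Theorem corollary7p10 (R : realType) (n : nat) (X : set 'rV[R]_n) :
  closed X -> convex_subset X -> HM_euclid X 1.
Proof.
move=> _ cvx l c Hc _.
pose F := fun p : int * seq 'rV[R]_n =>
  (- p.1, [:: nth 0 p.2 0; mid (nth 0 p.2 0) (nth 0 p.2 1); nth 0 p.2 1]).
exists (map F c); split.
  move=> q /mapP [[z s] /Hc [] + + + + ->] /=.
  case: s => [|u [|v [|]]] //= _ inX /andP [uv _] tl.
  have [um mv] := andP (mid_neq _ _ uv).
  split => //.
  - move=> w; rewrite !inE => /orP [/eqP ->|/orP [/eqP ->|/eqP ->]];
      try (by apply: inX; rewrite !inE eqxx ?orbT).
    apply: cvx; try lra; by apply: inX; rewrite !inE eqxx ?orbT.
  - by rewrite /= um mv.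
  - by rewrite /= addr0 edist_mid -tl /= addr0.
move=> t; congr coef.
elim: c Hc => [|[z s] c IH] Hc //=.
rewrite bd_cons IH; last by move=> p pc; apply: Hc; rewrite inE pc orbT.
move: (Hc (z, s) (mem_head _ _)); clear Hc => -[].
case: s => [|u [|v [|]]] //= _ _ /andP [uv _] _.
rewrite /bd_gen /face_ok /= edist_mid eqxx /=.
by rewrite expr1 mulrN1 opprK.
Qed.
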